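(* Let $A=\{a_1,\dots,a_k\}$ be a finite set of options and let $u_1,u_2:A\to\mathbb{R}$ be arbitrary. In the two-player Price \& Choose game defined in the context, (i) every subgame-perfect Nash equilibrium $\sigma=(\sigma_1,\sigma_2)$ has an efficient outcome, i.e. $\sigma_2(\sigma_1)\in\arg\max_{a\in A}\,(u_1(a)+u_2(a))$; and (ii) for every efficient option $a\in A$ there exists a subgame-perfect Nash equilibrium $\sigma$ with $\sigma_2(\sigma_1)=a$. (In particular, a subgame-perfect Nash equilibrium exists.)
   Context: Two players with quasi-linear utilities: if option $a\in A$ is selected and player $i$ receives monetary transfer $t_i$, player $i$'s utility is $u_i(a)+t_i$. Let $P=\{p\in\mathbb{R}^k:\sum_{j=1}^k p_j=0\}$. The Price \& Choose (P\&C) game: first player 1 chooses a price vector $p\in P$; then player 2, having observed $p$, chooses an option $a_j\in A$ and pays $p_j$ to player 1. Payoffs are $g_1(p,a_j)=u_1(a_j)+p_j$ and $g_2(p,a_j)=u_2(a_j)-p_j$. A (pure) strategy profile is $\sigma=(\sigma_1,\sigma_2)$ with $\sigma_1\in P$ and $\sigma_2:P\to A$. It is a subgame-perfect Nash equilibrium if for every $p\in P$, $\sigma_2(p)\in\arg\max_{a\in A}g_2(p,a)$, and $g_1(\sigma_1,\sigma_2(\sigma_1))\ge g_1(p,\sigma_2(p))$ for all $p\in P$. Its outcome is $\sigma_2(\sigma_1)$. An option $a$ is efficient if $u_1(a)+u_2(a)=\max_{b\in A}(u_1(b)+u_2(b))$. *)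

(* Defs.v *)
From mathcomp Require Import all_boot all_order all_algebra.
From mathcomp Require Import reals.
Set Implicit Arguments. Unset Strict Implicit. Unset Printing Implicit Defensive.
Import Order.TTheory GRing.Theory Num.Theory.
Local Open Scope ring_scope.

Section PC.
Variables (R : realType) (k : nat).

Definition price_space : Type := {p : 'I_k -> R | \sum_(j < k) p j = 0}.

Definition price (p : price_space) : 'I_k -> R := proj1_sig p.

Variables (u1 u2 : 'I_k -> R).

Definition g1 (p : price_space) (j : 'I_k) : R := u1 j + price p j.
Definition g2 (p : price_space) (j : 'I_k) : R := u2 j - price p j.

Definition is_SPNE (s1 : price_space) (s2 : price_space -> 'I_k) : Prop :=
  (forall p : price_space, forall b : 'I_k, g2 p b <= g2 p (s2 p)) /\
  (forall p : price_space, g1 p (s2 p) <= g1 s1 (s2 s1)).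

Definition outcome (s1 : price_space) (s2 : price_space -> 'I_k) : 'I_k := s2 s1.

Definition efficient (a : 'I_k) : Prop :=
  forall b : 'I_k, u1 b + u2 b <= u1 a + u2 a.

End PC.

(* Main.v *)
Require Import Defs.
From mathcomp Require Import all_boot all_order all_algebra.
From mathcomp Require Import reals.
From mathcomp Require Import lra.
Import Order.TTheory GRing.Theory Num.Theory.
Local Open Scope ring_scope.

Lemma norm_sum (R : realType) (k : nat) (q : 'I_k -> R) : (0 < k)%N ->
  \sum_(j < k) (q j - (\sum_(i < k) q i) / k%:R) = 0.
Proof.
move=> hk; rewrite sumrB sumr_const card_ord -[_ *+ k]mulr_natr divfK ?subrr //.
by rewrite pnatr_eq0 -lt0n.
Qed.

Definition mkp (R : realType) (k : nat) (q : 'I_k -> R) (hk : (0 < k)%N)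
  : price_space R k := exist _ _ (@norm_sum R k q hk).

Arguments mkp {R k} q hk.

Lemma mkpE (R : realType) (k : nat) (q : 'I_k -> R) (hk : (0 < k)%N) j :
  price (@mkp R k q hk) j = q j - (\sum_(i < k) q i) / k%:R.
Proof. by []. Qed.

Lemma avg_le (R : realType) (k : nat) (u1 u2 : 'I_k -> R) (p : price_space R k)
  (V : R) : (0 < k)%N -> (forall j, g2 u2 p j <= V) ->
  (\sum_(i < k) u2 i) / k%:R <= V.
Proof.
move=> hk hV.
have hs : \sum_(i < k) g2 u2 p i = \sum_(i < k) u2 i.
  by rewrite /g2 sumrB /price (proj2_sig p) subr0.
rewrite ler_pdivrMr ?ltr0n // -hs mulr_natr -[k in _ *+ k]card_ord -sumr_const.
by apply: ler_sum => i _.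
Qed.
Arguments avg_le {R k} u1 u2 p V.

Theorem proposition1 (R : realType) (k : nat) (u1 u2 : 'I_k -> R) :
  (forall (s1 : price_space R k) (s2 : price_space R k -> 'I_k),
      is_SPNE u1 u2 s1 s2 -> efficient u1 u2 (outcome s1 s2)) /\
  (forall a : 'I_k, efficient u1 u2 a ->
      exists (s1 : price_space R k) (s2 : price_space R k -> 'I_k),
        is_SPNE u1 u2 s1 s2 /\ outcome s1 s2 = a).
Proof.
split.
- move=> s1 s2 [h2 h1] b; rewrite /outcome.
  have hk : (0 < k)%N by case: b => [i hi]; apply: leq_ltn_trans hi.
  set a := s2 s1.
  rewrite leNgt; apply/negP => hlt.
  set S := \sum_(i < k) u2 i.
  have hV : S / k%:R <= g2 u2 s1 a by apply: avg_le => // j; apply: h2.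
  set e := (u1 b + u2 b - (u1 a + u2 a)) / 2.
  have he : 0 < e by rewrite divr_gt0 // subr_gt0.
  set q := fun j : 'I_k => u2 j - (if j == b then e else 0).
  have hSq : \sum_(i < k) q i = S - e.
    rewrite /q sumrB /S; congr (_ - _).
    by rewrite (bigD1 b) //= eqxx big1 ?addr0 // => i /negbTE ->.
  set p := mkp q hk.
  have hb : s2 p = b.
    apply/eqP; apply: contraT => hne.
    have := h2 p b; rewrite /g2 !mkpE /q eqxx (negbTE hne) hSq.
    lra.
  have := h1 p; rewrite hb /g1 mkpE /q eqxx hSq.
  move: hV; rewrite /g2.
  have hek : 0 <= e / k%:R by rewrite divr_ge0 // ltW.
  have -> : (S - e) / k%:R = S / k%:R - e / k%:R by rewrite mulrBl.
  rewrite /e in he hek *.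
  lra.
- move=> a heff.
  have hk : (0 < k)%N := leq_ltn_trans (leq0n _) (ltn_ord a).
  set S := \sum_(i < k) u2 i.
  set s1 := mkp u2 hk.
  pose m (p : price_space R k) := [arg max_(j > a) g2 u2 p j]%O.
  have hm : forall p j, g2 u2 p j <= g2 u2 p (m p).
    by move=> p j; rewrite /m; case: arg_maxP => // i _ /(_ j isT).
  pose s2 (p : price_space R k) := if g2 u2 p (m p) <= g2 u2 p a then a else m p.
  have hbr : forall p j, g2 u2 p j <= g2 u2 p (s2 p).
    move=> p j; rewrite /s2; case: ifP => h; last exact: hm.
    exact: le_trans (hm p j) h.
  have hs1 : s2 s1 = a.
    have E : forall x, u2 x - (u2 x - S / k%:R) = S / k%:R by move=> x; lra.
    by rewrite /s2 /g2 !mkpE -/S !E lexx.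
  exists s1, s2; split => //; split => // p.
  rewrite hs1.
  have hV : S / k%:R <= g2 u2 p (s2 p) by apply: avg_le => // j; apply: hbr.
  have := heff (s2 p); move: hV.
  rewrite /g1 /g2 mkpE -/S; lra.
Qed.
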